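(* Let $P\subseteq M_{\mathbb R}$ be an $n$-dimensional reflexive polytope and let $\Lambda:=\Lambda_{n-2}$ be the sublattice of $M$ generated by all lattice points lying in faces of $P$ of dimension $n-2$. Let $x\in\mathcal R\setminus\Lambda$ and let $y\in\partial P\cap\Lambda$ with $y\notin\mathcal F_x$. Then $\langle\eta_x,y\rangle\ge 1$, and the point $p(x,y):=\langle\eta_x,y\rangle\,x+y$ lies in $\mathcal R\setminus\Lambda$ and is a root orthogonal to $x$, i.e. $\langle\eta_x,p(x,y)\rangle=0=\langle\eta_{p(x,y)},x\rangle$.
   Context: $M\cong\mathbb Z^n$ is a lattice, $N=\mathrm{Hom}_{\mathbb Z}(M,\mathbb Z)$ its dual with pairing $\langle\cdot,\cdot\rangle$. A reflexive polytope is an $n$-dimensional lattice polytope $P\subseteq M_{\mathbb R}$ containing the origin in its interior such that the dual polytope $P^*=\{u\in N_{\mathbb R}:\langle u,m\rangle\ge-1\ \forall m\in P\}$ has vertices in $N$; equivalently every facet $F$ of $P$ equals $\{m\in P:\langle\eta_F,m\rangle=-1\}$ for a unique $\eta_F\in N$ with $\langle \eta_F,\cdot\rangle\ge -1$ on $P$. $\partial P$ is the boundary of $P$. $\mathcal R$ (the set of Demazure roots of $P$) is the set of lattice points of $M$ lying in the relative interior of some facet of $P$. For $x\in\mathcal R$, $\mathcal F_x$ denotes the unique facet of $P$ containing $x$, and $\eta_x:=\eta_{\mathcal F_x}\in N$ is its inner normal, so $\langle\eta_x,\mathcal F_x\rangle=-1$. Two roots $x,y\in\mathcal R$ are called orthogonal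 if $\langle\eta_x,y\rangle=0=\langle\eta_y,x\rangle$. *)

(* Defs.v *)
(* Reflexive polytopes in M_R = R^n (R : realType),
   lattice M = Z^n as 'rV[int]_n, dual N identified with 'rV[int]_n
   via the standard dot-product pairing. *)
From HB Require Import structures.
From mathcomp Require Import all_boot all_order all_algebra.
From mathcomp Require Import reals.
Set Implicit Arguments. Unset Strict Implicit. Unset Printing Implicit Defensive.
Import Order.TTheory GRing.Theory Num.Theory.
Local Open Scope ring_scope.

Section Polytopes.
Variables (R : realType) (n : nat).

Local Notation pt := 'rV[R]_n.
Local Notation lat := 'rV[int]_n.

Definition toR (m : lat) : pt := map_mx (fun z : int => z%:~R) m.

Definition pairR (u : lat) (m : pt) : R := \sum_(i < n) (u 0 i)%:~R * m 0 i.
Definition dotR (u m : pt) : R := \sum_(i < n) u 0 i * m 0 i.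
Definition pairZ (u m : lat) : int := \sum_(i < n) u 0 i * m 0 i.

Definition conv (V : seq lat) : pt -> Prop := fun m =>
  exists w : 'I_(size V) -> R, (forall i, 0 <= w i) /\ \sum_i w i = 1 /\
    m = \sum_i w i *: toR (nth 0 V i).

Definition face (P F : pt -> Prop) : Prop :=
  exists (u : pt) (c : R), (forall m, P m -> c <= dotR u m) /\
    (forall m, F m <-> (P m /\ dotR u m = c)).

Definition affdim_ge (F : pt -> Prop) (k : nat) : Prop :=
  exists (p0 : pt) (q : 'I_k -> pt), F p0 /\ (forall i, F (q i)) /\
    row_free (\matrix_(i < k) (q i - p0)).

Definition affdim (F : pt -> Prop) (d : nat) : Prop :=
  affdim_ge F d /\ ~ affdim_ge F d.+1.

Definition affhull (F : pt -> Prop) : pt -> Prop := fun m =>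
  exists k (p : 'I_k -> pt) (w : 'I_k -> R), (forall i, F (p i)) /\
    \sum_i w i = 1 /\ m = \sum_i w i *: p i.

Definition near (m z : pt) (e : R) : Prop := forall j, `|z 0 j - m 0 j| < e.

Definition relint (F : pt -> Prop) : pt -> Prop := fun m =>
  F m /\ exists e, 0 < e /\ forall z, affhull F z -> near m z e -> F z.

Definition interior (P : pt -> Prop) : pt -> Prop := fun m =>
  exists e, 0 < e /\ forall z, near m z e -> P z.

Definition boundary (P : pt -> Prop) : pt -> Prop := fun m =>
  P m /\ ~ interior P m.

Definition facet (P F : pt -> Prop) : Prop := face P F /\ affdim F n.-1.

Definition normal (P F : pt -> Prop) (eta : lat) : Prop :=
  (forall m, P m -> -1 <= pairR eta m) /\
  (forall m, F m <-> (P m /\ pairR eta m = -1)).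

Definition reflexive_polytope (V : seq lat) : Prop :=
  affdim (conv V) n /\ interior (conv V) 0 /\
  forall F, facet (conv V) F -> exists eta, normal (conv V) F eta.

Definition is_root (V : seq lat) (x : lat) : Prop :=
  exists F, facet (conv V) F /\ relint F (toR x).

Definition in_Lambda (V : seq lat) (z : lat) : Prop :=
  exists k (g : 'I_k -> lat) (c : 'I_k -> int),
    (forall i, exists (F : pt -> Prop) (d : nat),
        face (conv V) F /\ affdim F d /\ d.+2 = n /\ F (toR (g i))) /\
    z = \sum_i c i *: g i.

End Polytopes.

Arguments reflexive_polytope R {n} V.
Arguments is_root R {n} V x.
Arguments in_Lambda R {n} V z.
Arguments toR {R n} m.

(* Main.v *)
Require Import Defs.
From HB Require Import structures.
From mathcomp Require Import all_boot all_order all_algebra.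
From mathcomp Require Import reals.
From Stdlib Require Import Classical.
From mathcomp Require Import ring lra zify.
From Stdlib Require Import Lia.
Set Implicit Arguments. Unset Strict Implicit. Unset Printing Implicit Defensive.
Import Order.TTheory GRing.Theory Num.Theory.
Local Open Scope ring_scope.


Section Basics.
Variable R : realType.

Lemma dotRE k (u m : 'rV[R]_k) : dotR u m = (u *m m^T) 0 0.
Proof. by rewrite /dotR !mxE; apply: eq_bigr => i _; rewrite !mxE. Qed.

Lemma dotRC k (u m : 'rV[R]_k) : dotR u m = dotR m u.
Proof. by rewrite /dotR; apply: eq_bigr => i _; rewrite mulrC. Qed.

Lemma dotRDl k (u v m : 'rV[R]_k) : dotR (u + v) m = dotR u m + dotR v m.
Proof. by rewrite /dotR -big_split; apply: eq_bigr => i _; rewrite !mxE mulrDl. Qed.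

Lemma dotRDr k (u v m : 'rV[R]_k) : dotR m (u + v) = dotR m u + dotR m v.
Proof. by rewrite dotRC dotRDl !(dotRC m). Qed.

Lemma dotRZl k a (u m : 'rV[R]_k) : dotR (a *: u) m = a * dotR u m.
Proof. by rewrite /dotR mulr_sumr; apply: eq_bigr => i _; rewrite !mxE mulrA. Qed.

Lemma dotRZr k a (u m : 'rV[R]_k) : dotR m (a *: u) = a * dotR m u.
Proof. by rewrite dotRC dotRZl dotRC. Qed.

Lemma dotRNl k (u m : 'rV[R]_k) : dotR (- u) m = - dotR u m.
Proof. by rewrite -scaleN1r dotRZl mulN1r. Qed.

Lemma dotRNr k (u m : 'rV[R]_k) : dotR m (- u) = - dotR m u.
Proof. by rewrite dotRC dotRNl dotRC. Qed.

Lemma dotRBl k (u v m : 'rV[R]_k) : dotR (u - v) m = dotR u m - dotR v m.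
Proof. by rewrite dotRDl dotRNl. Qed.

Lemma dotRBr k (u v m : 'rV[R]_k) : dotR m (u - v) = dotR m u - dotR m v.
Proof. by rewrite dotRDr dotRNr. Qed.

Lemma dotR0l k (m : 'rV[R]_k) : dotR 0 m = 0.
Proof. by rewrite /dotR big1 // => i _; rewrite mxE mul0r. Qed.

Lemma dotR0r k (m : 'rV[R]_k) : dotR m 0 = 0.
Proof. by rewrite dotRC dotR0l. Qed.

Lemma dotR_sumr k (I : finType) (w : I -> R) (f : I -> 'rV[R]_k) u :
  dotR u (\sum_i w i *: f i) = \sum_i w i * dotR u (f i).
Proof.
rewrite /dotR; under eq_bigr => j _ do rewrite summxE mulr_sumr.
rewrite exchange_big /=; apply: eq_bigr => i _.
rewrite mulr_sumr; apply: eq_bigr => j _; rewrite !mxE; ring.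
Qed.

Lemma dotR_sum_l k (I : finType) (f : I -> 'rV[R]_k) u :
  dotR (\sum_i f i) u = \sum_i dotR (f i) u.
Proof.
rewrite /dotR; under eq_bigr => j _ do rewrite summxE mulr_suml.
by rewrite exchange_big.
Qed.

Lemma dotR_self_gt0 k (b : 'rV[R]_k) : b != 0 -> 0 < dotR b b.
Proof.
move=> bn0; have [j bj] : exists j, b 0 j != 0.
  apply/existsP; apply: contraNT bn0 => /existsPn H; apply/eqP/rowP => j.
  by rewrite mxE; apply/eqP; move: (H j); rewrite negbK.
rewrite /dotR (bigD1 j) //= ltr_wpDr //; last by rewrite -expr2 exprn_even_gt0.  
by apply: sumr_ge0 => i _; rewrite -expr2 sqr_ge0.
Qed.

Lemma toR_pair n (eta m : 'rV[int]_n) : pairR eta (toR m) = (pairZ eta m)%:~R :> R.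
Proof.
rewrite /pairR /pairZ rmorph_sum /=; apply: eq_bigr => i _.
by rewrite mxE rmorphM.
Qed.

Lemma pairR_dot n (eta : 'rV[int]_n) (m : 'rV[R]_n) : pairR eta m = dotR (toR eta) m.
Proof. by rewrite /pairR /dotR; apply: eq_bigr => i _; rewrite mxE. Qed.

Lemma toR_add n (a b : 'rV[int]_n) : toR (a + b) = toR a + toR b :> 'rV[R]_n.
Proof. by apply/rowP => i; rewrite !mxE rmorphD. Qed.

Lemma toR_scale n (c : int) (a : 'rV[int]_n) : toR (c *: a) = c%:~R *: toR a :> 'rV[R]_n.
Proof. by apply/rowP => i; rewrite !mxE rmorphM. Qed.

Lemma toR_inj n : injective (@toR R n).
Proof.
move=> a b /rowP H; apply/rowP => i; have := H i; rewrite !mxE.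
by move/eqP; rewrite eqr_int => /eqP.
Qed.

End Basics.


Section Farkas.
Variables (R : realType) (k : nat).
Local Notation vec := 'rV[R]_k.

Definition cone N (a : 'I_N -> vec) (b : vec) : Prop :=
  exists w : 'I_N -> R, (forall i, 0 <= w i) /\ b = \sum_i w i *: a i.

Lemma farkas N : forall (a : 'I_N -> vec) (b : vec), ~ cone a b ->
  exists y, (forall i, 0 <= dotR y (a i)) /\ dotR y b < 0.
Proof.
elim: N => [|N IH] a b nc.
  exists (- b); split => [[]//|].
  have bn0 : b != 0.
    apply/eqP => b0; apply: nc; exists (fun _ => 0); split => //.
    by rewrite big_ord0 b0.
  by rewrite dotRNl oppr_lt0 dotR_self_gt0.
pose a0 := a ord0; pose a' i := a (lift ord0 i).
have nc0 : ~ cone a' b.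
  move=> [w [w0 bE]]; apply: nc.
  exists (fun i => if unlift ord0 i is Some j then w j else 0); split.
    by move=> i; case: unlift.
  by rewrite big_ord_recl /= unlift_none scale0r add0r bE; apply: eq_bigr => i _; rewrite liftK.
have [y [ys yb]] := IH a' b nc0.
have [ya|ya] := lerP 0 (dotR y a0).
  exists y; split=> // i; case: (unliftP ord0 i) => [j ->|->] //; exact: ys.
pose al := - dotR y a0.
have al0 : 0 < al by rewrite /al oppr_gt0.
pose f c := al *: c + dotR y c *: a0.
pose b' := al *: b + dotR y b *: a0.
have nc' : ~ cone (fun i => f (a' i)) b'.
  move=> [w [w0 bE]]; apply: nc.
  pose c := (\sum_i w i * dotR y (a' i) - dotR y b) / al.
  exists (fun i => if unlift ord0 i is Some j then w j else c); split.
    move=> i; case: unlift => // ; apply: divr_ge0; last exact: ltW.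
    rewrite subr_ge0; apply: le_trans (ltW yb) _.
    by apply: sumr_ge0 => j _; apply: mulr_ge0.
  rewrite big_ord_recl /= unlift_none.
  under eq_bigr => i _ do rewrite liftK.
  apply: (scalerI (lt0r_neq0 al0)).
  rewrite scalerDr scalerA mulrC mulfVK ?(lt0r_neq0 al0) // scaler_sumr.
  have -> : al *: b = b' - dotR y b *: a0 by rewrite /b' addrK.
  rewrite bE /f; under [X in _ = _ + X]eq_bigr => i _ do rewrite scalerA mulrC -scalerA.
  rewrite (eq_bigr (fun i => w i *: (al *: a' i) + (w i * dotR y (a' i)) *: a0)); last first.
    by move=> i _; rewrite scalerDr scalerA.
  by rewrite big_split /= scalerBl -scaler_suml -addrA addrC.
have [y' [y's y'b]] := IH _ _ nc'.
exists (al *: y' + dotR y' a0 *: y); split.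
  move=> i; case: (unliftP ord0 i) => [j ->|->].
    rewrite dotRDl !dotRZl; have := y's j; rewrite /f dotRDr !dotRZr.
    by rewrite (mulrC al) (mulrC (dotR y' a0)) (dotRC y') (dotRC y) /a'.
  by rewrite dotRDl !dotRZl -/a0 /al; lra.
move: y'b; rewrite /b' dotRDl !dotRZl dotRDr !dotRZr.
by rewrite (mulrC al) (mulrC (dotR y' a0)) (dotRC y').
Qed.

End Farkas.


Lemma exmin (R : realType) (I : finType) (S : pred I) (f : I -> R) i0 : S i0 ->
  exists2 i, S i & forall j, S j -> f i <= f j.
Proof.
move=> Si0.
by case: (@Order.TotalTheory.arg_minP _ R I i0 S f Si0) => i Si H; exists i.
Qed.

Section Poly.
Variables (R : realType) (n : nat) (V : seq 'rV[int]_n.+1).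
Local Notation N := n.+1.
Local Notation pt := 'rV[R]_N.
Local Notation P := (@conv R N V).
Local Notation sV := (size V).

Definition vs (i : 'I_sV) : pt := toR (nth 0 V i).

Definition feasible (u : pt) := forall i, -1 <= dotR u (vs i).

Lemma feasible_P u m : feasible u -> P m -> -1 <= dotR u m.
Proof.
move=> fu [w [w0 [w1 ->]]]; rewrite dotR_sumr -w1 -sumrN.
by apply: ler_sum => i _; have := fu i; have := w0 i; nra.
Qed.

Lemma supportP u m (w : 'I_sV -> R) : feasible u -> (forall i, 0 <= w i) ->
  \sum_i w i = 1 -> m = \sum_i w i *: vs i -> dotR u m = -1 ->
  forall i, w i != 0 -> dotR u (vs i) = -1.
Proof.
move=> fu w0 w1 mE um i wi.
have H : \sum_i w i * (dotR u (vs i) + 1) = 0.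
  under eq_bigr => j _ do rewrite mulrDr mulr1.
  by rewrite big_split /= w1 -dotR_sumr -mE um addNr.
have G : forall j, true -> 0 <= w j * (dotR u (vs j) + 1).
  by move=> j _; apply: mulr_ge0 => //; have := fu j; lra.
have := @psumr_eq0P _ _ _ _ G H i isT.
by move/eqP; rewrite mulf_eq0 (negPf wi) /= addr_eq0 => /eqP.
Qed.

Definition tight (u : pt) := [set i : 'I_sV | dotR u (vs i) == -1].

Definition tmx (S : {set 'I_sV}) : 'M[R]_(sV, N) :=
  \matrix_(i, j) (if i \in S then vs i 0 j else 0).

Lemma row_tmx (S : {set 'I_sV}) i : row i (tmx S) = if i \in S then vs i else 0.
Proof. by apply/rowP => j; rewrite !mxE; case: (i \in S); rewrite ?mxE. Qed.

Lemma tmx_orth (S : {set 'I_sV}) (d : pt) :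
  (forall i, i \in S -> dotR d (vs i) = 0) <-> tmx S *m d^T = 0.
Proof.
split.
  move=> H; apply/matrixP => i j; rewrite !mxE (ord1 j).
  case: (boolP (i \in S)) => iS.
    transitivity (dotR d (vs i)); last exact: H.
    by rewrite /dotR; apply: eq_bigr => l _; rewrite !mxE iS mulrC.
  by apply: big1 => l _; rewrite !mxE (negPf iS) mul0r.
move=> H i iS; have := congr1 (fun M : 'M[R]_(sV, 1) => M i 0) H.
rewrite !mxE => <-; rewrite /dotR; apply: eq_bigr => l _.
by rewrite !mxE iS mulrC.
Qed.

Lemma tmxS (S1 S2 : {set 'I_sV}) : S1 \subset S2 -> (tmx S1 <= tmx S2)%MS.
Proof.
move=> sub; apply/row_subP => i; rewrite row_tmx.
case: ifP => iS; last exact: sub0mx.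
by have := row_sub i (tmx S2); rewrite row_tmx (subsetP sub i iS).
Qed.

Lemma rank_up (S1 S2 : {set 'I_sV}) w (d : pt) : S1 \subset S2 -> w \in S2 ->
  (forall i, i \in S1 -> dotR d (vs i) = 0) -> dotR d (vs w) != 0 ->
  (\rank (tmx S1) < \rank (tmx S2))%N.
Proof.
move=> sub wS /tmx_orth orth dw.
have sM := tmxS sub.
rewrite (ltn_leqif (mxrank_leqif_sup sM)).
apply/negP => /(submx_trans (row_sub w _)); rewrite row_tmx wS => /submxP [D vE].
move: dw; have : vs w *m d^T = 0 by rewrite vE -mulmxA orth mulmx0.
move=> /(congr1 (fun M : 'M[R]_1 => M 0 0)); rewrite -dotRE mxE dotRC => ->.
by rewrite eqxx.
Qed.

Lemma in_span u m : feasible u -> P m -> dotR u m = -1 -> (m <= tmx (tight u))%MS.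
Proof.
move=> fu Pm um; have [w [w0 [w1 mE]]] := Pm.
rewrite mE; apply: summx_sub => i _.
have [->|wi] := eqVneq (w i) 0; first by rewrite scale0r sub0mx.
apply: scalemx_sub.
have := row_sub i (tmx (tight u)); rewrite row_tmx inE.
by rewrite (supportP fu w0 w1 mE um wi) eqxx.
Qed.

Definition vertex (u : pt) := feasible u /\ \rank (tmx (tight u)) = N.

Lemma vertex_uniq (S : {set 'I_sV}) u1 u2 : S \subset tight u1 -> S \subset tight u2 ->
  \rank (tmx S) = N -> u1 = u2.
Proof.
move=> s1 s2 rk.
have H : tmx S *m (u1 - u2)^T = 0.
  apply/tmx_orth => i iS; rewrite dotRC dotRBr.
  have := subsetP s1 i iS; have := subsetP s2 i iS; rewrite !inE.
  by move=> /eqP h2 /eqP h1; rewrite !(dotRC (vs i)) h1 h2 subrr.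
have rf : row_full (tmx S) by rewrite /row_full rk.
have := row_full_inj rf; move=> /(_ 1 (u1 - u2)^T 0).
rewrite H mulmx0 => /(_ erefl) /eqP; rewrite trmx_eq0 subr_eq0 => /eqP.
by [].
Qed.

Hypothesis hP0 : interior P 0.

Lemma P0 : P 0.
Proof. by case: hP0 => e [e0 H]; apply: H => j; rewrite subrr normr0. Qed.

Lemma exneg (d : pt) : d != 0 -> exists i, dotR d (vs i) < 0.
Proof.
move=> dn0; case: hP0 => e [e0 H].
pose s := 1 + \sum_j `|d 0 j|.
have s0 : 0 < s by rewrite /s ltr_pwDl // sumr_ge0.
pose c := e / s.
have c0 : 0 < c by rewrite /c divr_gt0.
have Pz : P (- (c *: d)).
  apply: H => j; rewrite !mxE subr0 normrN normrM (gtr0_norm c0).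
  have hj : `|d 0 j| <= \sum_l `|d 0 l| by rewrite (bigD1 j) //= lerDl sumr_ge0.
  have -> : e = c * s by rewrite /c mulfVK ?gt_eqF.
  by rewrite ltr_pM2l // /s; lra.
have [w [w0 [w1 zE]]] := Pz.
apply: NNPP => nex.
have : 0 <= dotR d (- (c *: d)).
  rewrite zE dotR_sumr; apply: sumr_ge0 => i _; apply: mulr_ge0 => //.
  by rewrite leNgt; apply/negP => lt; apply: nex; exists i.
rewrite dotRNr dotRZr oppr_ge0 pmulr_rle0 // leNgt.
by rewrite dotR_self_gt0.
Qed.

Lemma size_pos : (0 < sV)%N.
Proof.
have [w [_ [w1 _]]] := P0; case: (size V) w w1 => // w; rewrite big_ord0 => /eqP.
by rewrite eq_sym oner_eq0.
Qed.

End Poly.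


Lemma dot_row_mx (R : realType) k (u m : 'rV[R]_k) (c c' : 'rV[R]_1) :
  dotR (row_mx u c) (row_mx m c') = dotR u m + c 0 0 * c' 0 0.
Proof.
rewrite /dotR big_split_ord /=; congr (_ + _).
  by apply: eq_bigr => i _; rewrite !row_mxEl.
by rewrite big_ord1 !row_mxEr.
Qed.

Section Poly2.
Variables (R : realType) (n : nat) (V : seq 'rV[int]_n.+1).
Local Notation N := n.+1.
Local Notation pt := 'rV[R]_N.
Local Notation P := (@conv R N V).
Local Notation sV := (size V).
Local Notation vs := (@vs R n V).
Local Notation feasible := (@feasible R n V).
Local Notation tight := (@tight R n V).
Local Notation tmx := (@tmx R n V).
Local Notation vertex := (@vertex R n V).
Hypothesis hP0 : interior P 0.

Lemma separation z : ~ P z -> exists u, feasible u /\ dotR u z < -1.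
Proof.
move=> nPz.
pose a (i : 'I_sV) : 'rV[R]_(N + 1) := row_mx (vs i) (const_mx 1).
pose b : 'rV[R]_(N + 1) := row_mx z (const_mx 1).
have nc : ~ cone a b.
  move=> [w [w0 bE]]; apply: nPz; exists w; split => //; split.
    have := congr1 (fun M : 'rV[R]_(N + 1) => M 0 (rshift N (ord0 : 'I_1))) bE.
    rewrite /b row_mxEr mxE summxE => ->; apply: eq_bigr => i _.
    by rewrite mxE /a row_mxEr mxE mulr1.
  apply/rowP => j.
  have := congr1 (fun M : 'rV[R]_(N + 1) => M 0 (lshift 1 j)) bE.
  rewrite /b row_mxEl summxE => ->; rewrite summxE; apply: eq_bigr => i _.
  by rewrite mxE /a row_mxEl !mxE.
have [y [ya yb]] := farkas nc.
pose u := lsubmx y; pose c := rsubmx y 0 0.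
have yE : y = row_mx u (rsubmx y) by rewrite hsubmxK.
have dE m : dotR y (row_mx m (const_mx 1)) = dotR u m + c.
  by rewrite {1}yE dot_row_mx [X in _ * X]mxE mulr1.
have hya i : 0 <= dotR u (vs i) + c by rewrite -dE; exact: ya.
have hyb : dotR u z + c < 0 by rewrite -dE.
have [c0|c0] := ltrP 0 c.
  have ci : 0 < c^-1 by rewrite invr_gt0.
  exists (c^-1 *: u); split.
    move=> i; rewrite dotRZl.
    have h := mulr_ge0 (ltW ci) (hya i).
    by rewrite mulrDr mulVf ?gt_eqF // in h; lra.
  rewrite dotRZl.
  have h : c^-1 * (dotR u z + c) < 0 by rewrite pmulr_rlt0.
  by rewrite mulrDr mulVf ?gt_eqF // in h; lra.
exfalso.
have [u0|un0] := eqVneq u 0.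
  have [w [_ [w1 _]]] := P0 hP0.
  have i : 'I_sV by case: (size V) w w1 => [w|k w _]; [rewrite big_ord0 => /eqP; rewrite eq_sym oner_eq0|exact: ord0].
  have := hya i; move: hyb; rewrite u0 !dotR0l; lra.
have [i ui] := exneg hP0 un0.
have := hya i; lra.
Qed.

Definition ratio (u d : pt) (i : 'I_sV) := (dotR u (vs i) + 1) / - dotR d (vs i).

Definition hitidx (u d : pt) := [pick i | (dotR d (vs i) < 0) &&
   [forall j, (dotR d (vs j) < 0) ==> (ratio u d i <= ratio u d j)]].

Definition hitt u d := if hitidx u d is Some i then ratio u d i else 0.

Lemma hitP u d : feasible u -> d != 0 -> (forall i, i \in tight u -> dotR d (vs i) = 0) ->
  [/\ 0 < hitt u d, feasible (u + hitt u d *: d), tight u \subset tight (u + hitt u d *: d)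
   & exists2 w, w \in tight (u + hitt u d *: d) & dotR d (vs w) < 0].
Proof.
move=> fu dn0 orth.
have [i0 i0n] := exneg hP0 dn0.
have [i Si imin] := @exmin R _ (fun i => dotR d (vs i) < 0) (ratio u d) _ i0n.
rewrite /hitt /hitidx; case: pickP => [j /andP [jn /forallP jmin] | none]; last first.
  exfalso; have := none i; rewrite Si /=; move/negP; apply; apply/forallP => j.
  by apply/implyP => /imin.
have jtight : j \notin tight u.
  by apply/negP => /orth; move: jn => /[swap] ->; rewrite ltxx.
have rpos : 0 < ratio u d j.
  rewrite /ratio divr_gt0 ?oppr_gt0 //.
  have := fu j; move: jtight; rewrite inE => /eqP; lra.
have feas : feasible (u + ratio u d j *: d).
  move=> l; rewrite dotRDl dotRZl.
  have [ln|lp] := ltrP (dotR d (vs l)) 0.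
    have h := implyP (jmin l) ln.
    have dl : 0 < - dotR d (vs l) by rewrite oppr_gt0.
    have qE : ratio u d l * - dotR d (vs l) = dotR u (vs l) + 1.
      by rewrite /ratio mulfVK // gt_eqF.
    have : ratio u d j * - dotR d (vs l) <= ratio u d l * - dotR d (vs l).
      by rewrite ler_pM2r.
    rewrite qE; lra.
  have := fu l; have := mulr_ge0 (ltW rpos) lp; lra.
split => //.
  apply/subsetP => l; rewrite !inE dotRDl dotRZl.
  by move=> /[dup] lt /eqP ->; rewrite orth ?inE // mulr0 addr0.
exists j => //; rewrite inE dotRDl dotRZl /ratio.
have a0 : dotR d (vs j) != 0 by rewrite lt_eqF.
rewrite invrN mulrN mulNr -mulrA mulVf // mulr1 opprD addrA subrr add0r.
by [].
Qed.

End Poly2.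


Section LA.
Variables (R : realType) (m N : nat).

Lemma ker_nonzero (A : 'M[R]_(m, N)) : (\rank A < N)%N ->
  exists2 d : 'rV[R]_N, d != 0 & A *m d^T = 0.
Proof.
move=> rk.
pose K := kermx A^T.
have rK : \rank K = (N - \rank A)%N by rewrite mxrank_ker mxrank_tr.
have Kn0 : K != 0 by rewrite -mxrank_eq0 rK subn_eq0 -ltnNge.
have [i ri] : exists i, row i K != 0.
  case: (pickP (fun i => row i K != 0)) => [i ri|none]; first by exists i.
  move: Kn0; have -> : K = 0; last by rewrite eqxx.
  by apply/row_matrixP => i; rewrite row0; apply/eqP; move: (none i) => /negbFE.
exists (row i K) => //.
have : row i K *m A^T = 0 by apply/sub_kermxP; exact: row_sub.
by move=> /(congr1 trmx); rewrite trmx_mul trmxK trmx0.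
Qed.

Lemma ker_two (A : 'M[R]_(m, N)) : (\rank A + 2 <= N)%N ->
  exists d1 d2 : 'rV[R]_N, [/\ A *m d1^T = 0, A *m d2^T = 0 &
     forall a b : R, a *: d1 + b *: d2 = 0 -> a = 0 /\ b = 0].
Proof.
move=> rk.
pose K := kermx A^T.
have rK : \rank K = (N - \rank A)%N by rewrite mxrank_ker mxrank_tr.
pose B := row_base K.
have rB : (1 < \rank K)%N by rewrite rK; lia.
pose i0 : 'I_(\rank K) := Ordinal (ltn_trans (ltnSn 0) rB).
pose i1 : 'I_(\rank K) := Ordinal rB.
have orth j : A *m (row j B)^T = 0.
  have : row j B *m A^T = 0.
    apply/sub_kermxP; apply: submx_trans (row_sub j B) _.
    by rewrite eq_row_base.
  by move=> /(congr1 trmx); rewrite trmx_mul trmxK trmx0.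
exists (row i0 B), (row i1 B); split => // a b H.
pose c : 'rV[R]_(\rank K) := \row_j (if j == i0 then a else if j == i1 then b else 0).
have cB : c *m B = 0.
  rewrite mulmx_sum_row (bigD1 i0) //= (bigD1 i1) //= big1.
    by rewrite !mxE eqxx /= addr0.
  by move=> j /andP [j0 j1]; rewrite !mxE (negPf j0) (negPf j1) scale0r.
have := row_free_inj (row_base_free K) (etrans cB (esym (mul0mx _ B))).
move=> /rowP c0; have := c0 i0; have := c0 i1; rewrite !mxE eqxx /=.
by move=> -> ->.
Qed.

End LA.

Section Poly3.
Variables (R : realType) (n : nat) (V : seq 'rV[int]_n.+1).
Local Notation N := n.+1.
Local Notation pt := 'rV[R]_N.
Local Notation P := (@conv R N V).
Local Notation sV := (size V).
Local Notation vs := (@vs R n V).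
Local Notation feasible := (@feasible R n V).
Local Notation tight := (@tight R n V).
Local Notation tmx := (@tmx R n V).
Local Notation vertex := (@vertex R n V).
Hypothesis hP0 : interior P 0.

Lemma climb z r : forall u, (N - \rank (tmx (tight u)) <= r)%N -> feasible u ->
  exists u', vertex u' /\ dotR u' z <= dotR u z.
Proof.
elim: r => [|r IH] u hr fu.
  exists u; split => //; split => //; apply/eqP; rewrite eqn_leq rank_leq_col /=.
  by rewrite -subn_eq0 -leqn0.
have [rk|rk] := ltnP (\rank (tmx (tight u))) N; last first.
  exists u; split => //; split => //; apply/eqP; rewrite eqn_leq rank_leq_col /=.
  by [].
have [d dn0 dA] := ker_nonzero rk.
pose d' := if 0 < dotR d z then - d else d.
have d'n0 : d' != 0 by rewrite /d'; case: ifP; rewrite ?oppr_eq0.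
have orth : forall i, i \in tight u -> dotR d' (vs i) = 0.
  move=> i it; have := (proj2 (tmx_orth _ _) dA) i it.
  by rewrite /d'; case: ifP => _ //; rewrite dotRNl => ->; rewrite oppr0.
have d'z : dotR d' z <= 0.
  rewrite /d'; case: ifP => h; first by rewrite dotRNl oppr_le0 ltW.
  by rewrite leNgt h.
have [t0 fu' sub [w wt wn]] := hitP hP0 fu d'n0 orth.
have rk' := rank_up sub wt orth (negbT (lt_eqF wn)).
have hr' : (N - \rank (tmx (tight (u + hitt V u d' *: d'))) <= r)%N.
  move: rk' hr; set a := \rank _; set b := \rank _; lia.
have [u'' [vu'' le'']] := IH _ hr' fu'.
exists u''; split => //; apply: le_trans le'' _.
by rewrite dotRDl dotRZl gerDl; apply: mulr_ge0_le0 => //; exact: ltW.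
Qed.

Lemma sep_vertex z : ~ P z -> exists u, vertex u /\ dotR u z < -1.
Proof.
move=> nPz; have [u [fu uz]] := separation hP0 nPz.
have [u' [vu' le']] := climb z (leqnn _) fu.
by exists u'; split => //; apply: le_lt_trans le' uz.
Qed.

Lemma Hrep m : (forall u, vertex u -> -1 <= dotR u m) -> P m.
Proof.
move=> H; apply: NNPP => nPm; have [u [vu um]] := sep_vertex nPm.
by have := H u vu; rewrite leNgt um.
Qed.

End Poly3.


Section Aff.
Variables (R : realType) (N : nat).
Local Notation pt := 'rV[R]_N.

Lemma row_free_row_neq0 k (M : 'M[R]_(k, N)) i : row_free M -> row i M != 0.
Proof.
move=> rf; apply/eqP => ri.
have := row_free_inj rf (etrans (esym (rowE i M)) (etrans ri (esym (mul0mx _ M)))).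
move=> /rowP /(_ i); rewrite !mxE !eqxx /= => /eqP; rewrite oner_eq0.
by [].
Qed.

Lemma affdim_free (Q : pt -> Prop) k (q : 'I_k.+1 -> pt) :
  row_free (\matrix_i q i) -> (forall i, Q (q i)) -> affdim_ge Q k.
Proof.
move=> rf Qq.
exists (q ord_max), (fun i => q (widen_ord (leqnSn k) i)); split => //; split => //.
apply: inj_row_free => c cD.
pose c' : 'rV[R]_k.+1 := \row_j (if unlift ord_max j is Some i then c 0 i
                                  else - \sum_i c 0 i).
have wl : forall i : 'I_k, widen_ord (leqnSn k) i = lift ord_max i.
  by move=> i; apply: val_inj; rewrite /= /bump leqNgt ltn_ord.
have : c' *m (\matrix_i q i) = 0.
  rewrite mulmx_sum_row big_ord_recr /= !mxE unlift_none.
  rewrite -[RHS]cD mulmx_sum_row.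
  under eq_bigr => i _ do rewrite !mxE wl liftK.
  have rq : forall j, row j (\matrix_i q i) = q j by move=> j; apply/rowP => l; rewrite !mxE.
  under eq_bigr => i _ do rewrite rq -wl.
  rewrite rq scaleNr scaler_suml -sumrB; apply: eq_bigr => i _.
  rewrite (_ : row i _ = q (widen_ord (leqnSn k) i) - q ord_max); last first.
    by apply/rowP => l; rewrite !mxE.
  by rewrite scalerBr.
move=> /eqP; rewrite mulmx_free_eq0 // => /eqP c'0.
apply/rowP => i; have := congr1 (fun M : 'rV[R]_k.+1 => M 0 (widen_ord (leqnSn k) i)) c'0.
by rewrite !mxE wl liftK.
Qed.

Lemma not_affdim (Q : pt -> Prop) m (A : 'M[R]_(m, N)) (u : pt) r :
  (\rank A <= r)%N -> (forall z, Q z -> dotR u z = -1 /\ (z <= A)%MS) ->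
  ~ affdim_ge Q r.
Proof.
move=> rA H [p0 [q [Qp0 [Qq rf]]]].
pose D := \matrix_(i < r) (q i - p0).
pose E := col_mx D p0.
have EA : (E <= A)%MS.
  rewrite col_mx_sub (proj2 (H _ Qp0)) andbT; apply/row_subP => i.
  have -> : row i D = q i + (-1) *: p0 by apply/rowP => j; rewrite !mxE; ring.
  by apply: addmx_sub; [exact: (proj2 (H _ (Qq i)))|apply: scalemx_sub; exact: (proj2 (H _ Qp0))].
have Du : D *m u^T = 0.
  apply/matrixP => i j; rewrite !mxE (ord1 j).
  transitivity (dotR u (q i - p0)).
    by rewrite /dotR; apply: eq_bigr => l _; rewrite !mxE mulrC.
  by rewrite dotRBr (proj1 (H _ (Qq i))) (proj1 (H _ Qp0)) subrr.
have p0u : forall i j : 'I_1, (p0 *m u^T) i j = -1.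
  by move=> i j; rewrite (ord1 i) (ord1 j) -dotRE dotRC (proj1 (H _ Qp0)).
have rfE : row_free E.
  apply: inj_row_free => c cE.
  rewrite -[c]hsubmxK /E mul_row_col in cE.
  have c20 : rsubmx c = 0.
    have := congr1 (fun M => (M *m u^T) 0 0) cE.
    rewrite mulmxDl -!mulmxA Du mulmx0 add0r mul0mx mxE big_ord1 mxE.
    rewrite p0u mulrN1 mxE => /eqP; rewrite oppr_eq0 => /eqP c0.
    by apply/rowP => j; rewrite (ord1 j) !mxE; rewrite -c0; congr (c _ _); apply: val_inj.
  rewrite c20 mul0mx addr0 in cE.
  move: cE => /eqP; rewrite mulmx_free_eq0 // => /eqP c10.
  by rewrite -[c]hsubmxK c10 c20; apply/rowP => j; rewrite !mxE; case: splitP => ? _; rewrite mxE.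
have := mxrankS EA; move: rfE; rewrite /row_free => /eqP ->.
by rewrite addn1; lia.
Qed.

End Aff.


Section Poly4.
Variables (R : realType) (n : nat) (V : seq 'rV[int]_n.+1).
Local Notation N := n.+1.
Local Notation pt := 'rV[R]_N.
Local Notation P := (@conv R N V).
Local Notation sV := (size V).
Local Notation vs := (@vs R n V).
Local Notation feasible := (@feasible R n V).
Local Notation tight := (@tight R n V).
Local Notation tmx := (@tmx R n V).
Local Notation vertex := (@vertex R n V).

Definition G (u : pt) : pt -> Prop := fun m => P m /\ dotR u m = -1.

Lemma vs_in_P i : P (vs i).
Proof.
exists (fun j => (j == i)%:R); split; first by move=> j; case: (j == i).
split; first by rewrite (bigD1 i) //= eqxx big1 ?addr0 // => j /negPf ->.
rewrite (bigD1 i) //= eqxx scale1r big1 ?addr0 // => j /negPf ->.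
by rewrite scale0r.
Qed.

Lemma G_face u : feasible u -> face P (G u).
Proof.
move=> fu; exists u, (-1); split; first by move=> m; exact: feasible_P.
by move=> m.
Qed.

Lemma rowsub_tmx k (S : {set 'I_sV}) (f : 'I_k -> 'I_sV) :
  row_free (rowsub f (tmx S)) ->
  (forall i, f i \in S) /\ row_free (\matrix_i vs (f i)).
Proof.
move=> rf.
have fS : forall i, f i \in S.
  move=> i; have := row_free_row_neq0 i rf; apply: contraNT => fi.
  by apply/eqP/rowP => j; rewrite !mxE (negPf fi).
split => //.
have -> : \matrix_i vs (f i) = rowsub f (tmx S).
  by apply/matrixP => i j; rewrite !mxE fS.
by [].
Qed.

Lemma affdim_tight (Q : pt -> Prop) (S : {set 'I_sV}) r :
  (forall i, i \in S -> Q (vs i)) -> \rank (tmx S) = r.+1 -> affdim_ge Q r.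
Proof.
move=> QS rk.
have : exists k (f : 'I_k -> 'I_sV), k = \rank (tmx S) /\ row_free (rowsub f (tmx S)).
  by exists _, (maxrankfun (tmx S)); split => //; exact: maxrowsub_free.
move=> [k [f [kE rf]]]; rewrite rk in kE; subst k.
have [fS rf'] := rowsub_tmx rf.
by apply: (affdim_free (q := fun i => vs (f i))) rf' _ => i; apply: QS.
Qed.

Lemma facet_vertex u : vertex u -> facet P (G u).
Proof.
move=> [fu rk]; split; first exact: G_face.
split.
  apply: (affdim_tight (S := tight u)) rk => i; rewrite inE => /eqP h.
  by split => //; exact: vs_in_P.
apply: (not_affdim (A := (1%:M : 'M[R]_N)) (u := u)) => //.
  by rewrite mxrank1.
by move=> z [_ zu]; split => //; exact: submx1.
Qed.

Lemma normal_vertex u eta : vertex u -> normal P (G u) eta -> toR eta = u.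
Proof.
move=> [fu rk] [_ H].
apply: (@vertex_uniq R n V (tight u)) => //; apply/subsetP => i; rewrite !inE => /eqP h.
have [_ ] := (H (vs i)).1 (conj (vs_in_P i) h).
by rewrite pairR_dot => ->.
Qed.

End Poly4.


Section Poly5.
Variables (R : realType) (n : nat) (V : seq 'rV[int]_n.+1).
Local Notation N := n.+1.
Local Notation pt := 'rV[R]_N.
Local Notation P := (@conv R N V).
Local Notation sV := (size V).
Local Notation vs := (@vs R n V).
Local Notation feasible := (@feasible R n V).
Local Notation tight := (@tight R n V).
Local Notation tmx := (@tmx R n V).
Local Notation vertex := (@vertex R n V).
Local Notation G := (@G R n V).
Hypothesis hP0 : interior P 0.

Lemma keep_tight u u' m : feasible u -> feasible u' -> P m -> dotR u m = -1 ->
  tight u \subset tight u' -> dotR u' m = -1.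
Proof.
move=> fu fu' Pm um sub; have [w [w0 [w1 mE]]] := Pm.
rewrite mE dotR_sumr -w1 -sumrN; apply: eq_bigr => i _.
have [->|wi] := eqVneq (w i) 0; first by rewrite mul0r oppr0.
have := subsetP sub i; rewrite !inE (supportP fu w0 w1 mE um wi) eqxx => /(_ isT) /eqP ->.
by rewrite mulrN1.
Qed.

Lemma rank_le (S : {set 'I_sV}) : (\rank (tmx S) <= N)%N.
Proof. exact: rank_leq_col. Qed.

Lemma claimC u m : feasible u -> P m -> dotR u m = -1 ->
  (\rank (tmx (tight u)) + 2 <= N)%N ->
  exists u', [/\ feasible u', dotR u' m = -1,
    (\rank (tmx (tight u)) < \rank (tmx (tight u')))%N & (\rank (tmx (tight u')) <= n)%N].
Proof.
move=> fu Pm um rk.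
have [d1 [d2 [o1 o2 ind]]] := ker_two rk.
pose K := #|{set 'I_sV}|.
pose d (l : 'I_K.+1) : pt := d1 + (l : nat)%:R *: d2.
have dn0 l : d l != 0.
  apply/eqP => h; have := ind 1 (l : nat)%:R; rewrite scale1r => /(_ h) [/eqP].
  by rewrite oner_eq0.
have orth l : forall i, i \in tight u -> dotR (d l) (vs i) = 0.
  move=> i it; rewrite dotRDl dotRZl.
  by rewrite (proj2 (tmx_orth _ _) o1 i it) (proj2 (tmx_orth _ _) o2 i it) mulr0 addr0.
pose ul l := u + hitt V u (d l) *: d l.
have hl l := hitP hP0 fu (dn0 l) (orth l).
have rkup l : (\rank (tmx (tight u)) < \rank (tmx (tight (ul l))))%N.
  have [_ _ sub [w wt wn]] := hl l.
  exact: rank_up sub wt (orth l) (negbT (lt_eqF wn)).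
apply: NNPP => H.
have allN l : \rank (tmx (tight (ul l))) = N.
  apply/eqP; rewrite eqn_leq rank_le /=; rewrite ltnNge; apply/negP => le.
  apply: H; exists (ul l); have [_ fl sub _] := hl l; split => //.
  exact: keep_tight fu fl Pm um sub.
have inj : injective (fun l => tight (ul l)).
  move=> l1 l2 /= e.
  have ue : ul l1 = ul l2.
    by apply: (@vertex_uniq R n V (tight (ul l1))) => //; rewrite e.
  have [t1 _ _ _] := hl l1; have [t2 _ _ _] := hl l2.
  move: ue; rewrite /ul => /addrI.
  set a := hitt V u (d l1); set b := hitt V u (d l2) => e2.
  have : (a - b) *: d1 + (a * (l1 : nat)%:R - b * (l2 : nat)%:R) *: d2 = 0.
    apply/rowP => j; have := congr1 (fun M : pt => M 0 j) e2; rewrite /d !mxE => e3.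
    transitivity (a * (d1 0 j + (l1 : nat)%:R * d2 0 j) - b * (d1 0 j + (l2 : nat)%:R * d2 0 j)).
      by ring.
    by rewrite e3 subrr.
  move=> /ind [ab /eqP]; move: ab => /eqP; rewrite subr_eq0 => /eqP ab.
  rewrite ab subr_eq0 => /eqP /(mulfI (negbT (gt_eqF t2))) /eqP; rewrite eqr_nat => /eqP.
  by move=> h; apply: val_inj.
by have := leq_card _ inj; rewrite card_ord ltnn.
Qed.

End Poly5.


Section Poly6.
Variables (R : realType) (n : nat) (V : seq 'rV[int]_n.+1).
Local Notation N := n.+1.
Local Notation pt := 'rV[R]_N.
Local Notation P := (@conv R N V).
Local Notation sV := (size V).
Local Notation vs := (@vs R n V).
Local Notation feasible := (@feasible R n V).
Local Notation tight := (@tight R n V).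
Local Notation tmx := (@tmx R n V).
Local Notation vertex := (@vertex R n V).
Local Notation G := (@G R n V).
Hypothesis hP0 : interior P 0.

Lemma climb2 m r : P m -> forall u, feasible u -> dotR u m = -1 ->
  (\rank (tmx (tight u)) <= n)%N -> (n - \rank (tmx (tight u)) <= r)%N ->
  exists u', [/\ feasible u', dotR u' m = -1 & \rank (tmx (tight u')) = n].
Proof.
move=> Pm; elim: r => [|r IH] u fu um rk hr.
  by exists u; split => //; apply/eqP; rewrite eqn_leq rk /=; lia.
have [e|lt] := eqVneq (\rank (tmx (tight u))) n; first by exists u.
have rk2 : (\rank (tmx (tight u)) + 2 <= N)%N by lia.
have [u' [fu' um' up le]] := claimC hP0 fu Pm um rk2.
apply: (IH u') => //; lia.
Qed.

Lemma ridge m u1 u2 : P m -> feasible u1 -> feasible u2 -> u1 != u2 ->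
  dotR u1 m = -1 -> dotR u2 m = -1 ->
  exists (Q : pt -> Prop) d, face P Q /\ affdim Q d /\ d.+2 = N /\ Q m.
Proof.
move=> Pm f1 f2 u12 m1 m2.
pose u0 := 2^-1 *: (u1 + u2).
have d0 z : dotR u0 z = (dotR u1 z + dotR u2 z) / 2.
  by rewrite /u0 dotRZl dotRDl mulrC.
have f0 : feasible u0 by move=> i; rewrite d0; have := f1 i; have := f2 i; lra.
have m0 : dotR u0 m = -1 by rewrite d0 m1 m2; lra.
have s1 : tight u0 \subset tight u1.
  apply/subsetP => i; rewrite !inE d0 => /eqP h; apply/eqP.
  have := f1 i; have := f2 i; lra.
have s2 : tight u0 \subset tight u2.
  apply/subsetP => i; rewrite !inE d0 => /eqP h; apply/eqP.
  have := f1 i; have := f2 i; lra.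
have rk0 : (\rank (tmx (tight u0)) <= n)%N.
  rewrite -ltnS ltn_neqAle rank_le andbT; apply/eqP => rk.
  by move/eqP: u12; apply; apply: (@vertex_uniq R n V (tight u0)).
have [u' [fu' mu' rk']] := climb2 Pm f0 m0 rk0 (leqnn _).
have mspan := in_span fu' Pm mu'.
have [n' nE] : exists n', n = n'.+1.
  case: (posnP n) => [n0|npos]; last by exists n.-1; rewrite prednK.
  exfalso; move/eqP: (etrans rk' n0); rewrite mxrank_eq0 => /eqP t0.
  by move: mspan; rewrite t0 => /submx0null m00; move: mu'; rewrite m00 dotR0r; lra.
exists (G u'), n'; split; first exact: G_face.
split; last by split; [rewrite nE | split].
split.
  apply: (affdim_tight (S := tight u')); last by rewrite rk' nE.
  by move=> i; rewrite inE => /eqP h; split => //; exact: vs_in_P.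
apply: (not_affdim (A := tmx (tight u')) (u := u')); first by rewrite rk' nE.
move=> z [Pz uz]; split => //; exact: in_span fu' Pz uz.
Qed.

End Poly6.


Section SeqLemmas.
Variables (R : realType) (T : eqType).

Lemma seq_margin (s : seq T) (f : T -> R) c : (forall u, u \in s -> c < f u) ->
  exists2 d, 0 < d & forall u, u \in s -> c + d <= f u.
Proof.
elim: s => [|a s IH] H; first by exists 1.
have [d d0 Hd] := IH (fun u us => H u (@mem_behead _ (a :: s) u us)).
have ha := H a (mem_head _ _).
exists (Num.min d (f a - c)); first by rewrite lt_min d0 subr_gt0.
move=> u; rewrite inE => /orP [/eqP ->|us].
  by rewrite -lerBrDl ge_min lexx orbT.
apply: le_trans (Hd u us); rewrite lerD2l ge_min lexx //.
Qed.

Lemma seq_bound (s : seq T) (f : T -> R) : exists2 L, 0 < L & forall u, u \in s -> f u <= L.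
Proof.
elim: s => [|a s [L L0 HL]]; first by exists 1.
exists (Num.max L (f a)); first by rewrite lt_max L0.
move=> u; rewrite inE => /orP [/eqP ->|us]; first by rewrite le_max lexx orbT.
by rewrite le_max HL.
Qed.

Lemma seq_argmin (s : seq T) (f : T -> R) a : a \in s ->
  exists2 b, b \in s & forall u, u \in s -> f b <= f u.
Proof.
elim: s a => [//|x s IH] a; rewrite inE => /orP [_|ain].
  case: s IH => [|y s] IH.
    by exists x => [|u]; rewrite ?mem_head // inE => /eqP ->.
  have [b bs Hb] := IH y (mem_head _ _).
  have [le|lt] := lerP (f x) (f b).
    exists x; first exact: mem_head.
    move=> u; rewrite inE => /orP [/eqP ->//|us]; exact: le_trans le (Hb u us).
  exists b; first by rewrite inE bs orbT.
  move=> u; rewrite inE => /orP [/eqP ->|us]; [exact: ltW|exact: Hb].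
have [b bs Hb] := IH a ain.
have [le|lt] := lerP (f x) (f b).
  exists x; first exact: mem_head.
  move=> u; rewrite inE => /orP [/eqP ->//|us]; exact: le_trans le (Hb u us).
exists b; first by rewrite inE bs orbT.
move=> u; rewrite inE => /orP [/eqP ->|us]; [exact: ltW|exact: Hb].
Qed.

End SeqLemmas.


Section Poly7.
Variables (R : realType) (n : nat) (V : seq 'rV[int]_n.+1).
Local Notation N := n.+1.
Local Notation pt := 'rV[R]_N.
Local Notation P := (@conv R N V).
Local Notation sV := (size V).
Local Notation vs := (@vs R n V).
Local Notation feasible := (@feasible R n V).
Local Notation tight := (@tight R n V).
Local Notation tmx := (@tmx R n V).
Local Notation vertex := (@vertex R n V).
Local Notation G := (@G R n V).
Hypothesis hP0 : interior P 0.

Definition bvec (S : {set 'I_sV}) : 'rV[R]_sV := \row_i (if i \in S then -1 else 0).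
Definition cand (S : {set 'I_sV}) : pt := bvec S *m pinvmx (tmx S)^T.
Definition vertexb (u : pt) := [forall i, -1 <= dotR u (vs i)] && (\rank (tmx (tight u)) == N).
Definition vlist := [seq u <- [seq cand X | X <- enum [set: {set 'I_sV}]] | vertexb u].

Lemma vertexbP u : vertexb u <-> vertex u.
Proof.
split.
  by move=> /andP [/forallP f /eqP r]; split.
by move=> [f r]; apply/andP; split; [apply/forallP|apply/eqP].
Qed.

Lemma cand_vertex u : vertex u -> cand (tight u) = u.
Proof.
move=> [fu rk].
have ub : u *m (tmx (tight u))^T = bvec (tight u).
  apply/rowP => i; rewrite !mxE.
  case: ifP => it.
    move: (it); rewrite inE => /eqP <-; rewrite /dotR; apply: eq_bigr => j _.
    by rewrite !mxE it.
  by apply: big1 => j _; rewrite !mxE it mulr0.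
have sb : (bvec (tight u) <= (tmx (tight u))^T)%MS by apply/submxP; exists u.
have := mulmxKpV sb; rewrite -/(cand _) -{1}ub => /eqP.
rewrite -subr_eq0 -mulmxBl mulmx_free_eq0; last by rewrite /row_free mxrank_tr rk.
by rewrite subr_eq0 => /eqP.
Qed.

Lemma vlistP u : u \in vlist <-> vertex u.
Proof.
split; first by rewrite mem_filter => /andP [/vertexbP].
move=> vu; rewrite mem_filter; apply/andP; split; first exact/vertexbP.
apply/mapP; exists (tight u); first by rewrite mem_enum inE.
by rewrite cand_vertex.
Qed.

Lemma P_convex a b t : P a -> P b -> 0 <= t <= 1 -> P (t *: a + (1 - t) *: b).
Proof.
move=> [wa [wa0 [wa1 aE]]] [wb [wb0 [wb1 bE]]] /andP [t0 t1].
exists (fun i => t * wa i + (1 - t) * wb i); split.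
  by move=> i; apply: addr_ge0; apply: mulr_ge0 => //; rewrite subr_ge0.
split; first by rewrite big_split /= -!mulr_sumr wa1 wb1 !mulr1 subrKC.
rewrite aE bE !scaler_sumr -big_split /=; apply: eq_bigr => i _.
by rewrite [RHS]scalerDl !scalerA.
Qed.

Lemma scale_interior y s : 1 < s -> P (s *: y) -> interior P y.
Proof.
move=> s1 Psy; case: hP0 => e0 [e00 H].
have s0 : 0 < s by lra.
have s10 : 0 < s - 1 by lra.
exists (e0 * (s - 1) / s); split; first by rewrite divr_gt0 // mulr_gt0.
move=> z nz.
pose w := (s / (s - 1)) *: (z - y).
have Pw : P w.
  apply: H => j; rewrite !mxE subr0 normrM gtr0_norm ?divr_gt0 //.
  have h := nz j.
  apply: (lt_le_trans (_ : _ < s / (s - 1) * (e0 * (s - 1) / s))).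
    by rewrite ltr_pM2l ?divr_gt0.
  rewrite (_ : s / (s - 1) * (e0 * (s - 1) / s) = e0) //.
  by field; rewrite !gt_eqF.
have hs : 0 <= s^-1 <= 1.
  by apply/andP; split; [rewrite invr_ge0 ltW|rewrite invf_le1 // ltW].
have Pc := P_convex Psy Pw hs.
suff <- : s^-1 *: (s *: y) + (1 - s^-1) *: w = z by [].
rewrite scalerA mulVf ?gt_eqF // scale1r /w scalerA.
have -> : (1 - s^-1) * (s / (s - 1)) = 1.
  by field; rewrite !gt_eqF.
by rewrite scale1r addrC subrK.
Qed.

Lemma boundary_facet y : boundary P y -> exists u, vertex u /\ dotR u y = -1.
Proof.
move=> [Py nint]; apply: NNPP => H.
have gt u : u \in vlist -> -1 < dotR u y.
  move=> /vlistP vu; rewrite lt_neqAle (feasible_P vu.1 Py) andbT.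
  by rewrite eq_sym; apply/eqP => e; apply: H; exists u.
have [d d0 Hd] := seq_margin gt.
apply: nint; apply: (@scale_interior y (1 + d)); first lra.
apply: Hrep => // u vu; rewrite dotRZr.
have := Hd u (proj2 (vlistP u) vu); nra.
Qed.

Lemma dot_near (v z p : pt) e : 0 <= e -> near p z e ->
  `|dotR v z - dotR v p| <= (\sum_j `|v 0 j|) * e.
Proof.
move=> e0 nz; rewrite -dotRBr /dotR mulr_suml.
apply: le_trans (ler_norm_sum _ _ _) _; apply: ler_sum => j _.
rewrite normrM ler_wpM2l // !mxE; exact: ltW (nz j).
Qed.

Lemma relint_vertex u p : vertex u -> G u p ->
  (forall v, vertex v -> v != u -> -1 < dotR v p) -> relint (G u) p.
Proof.
move=> vu Gp H; split => //.
have gt v : v \in [seq w <- vlist | w != u] -> -1 < dotR v p.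
  by rewrite mem_filter => /andP [vn /vlistP vv]; exact: H.
have [d d0 Hd] := seq_margin gt.
have [L L0 HL] := seq_bound vlist (fun v => \sum_j `|v 0 j|).
exists (d / L); split; first by rewrite divr_gt0.
move=> z [k [q [w [Gq [w1 zE]]]]] nz.
have uz : dotR u z = -1.
  rewrite zE dotR_sumr; under eq_bigr => i _ do rewrite (Gq i).2 mulrN1.
  by rewrite sumrN w1.
split => //; apply: Hrep => // v vv.
have [->|vn] := eqVneq v u; first by rewrite uz.
have vin : v \in [seq w <- vlist | w != u].
  by rewrite mem_filter vn /=; apply/vlistP.
have h1 := Hd v vin.
have h2 := dot_near v (ltW (divr_gt0 d0 L0)) nz.
have h3 := HL v (proj2 (vlistP v) vv).
have h4 : (\sum_j `|v 0 j|) * (d / L) <= d.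
  apply: (le_trans (ler_wpM2r (ltW (divr_gt0 d0 L0)) h3)).
  by rewrite mulrC mulfVK ?gt_eqF.
move: h2; rewrite ler_norml => /andP [h2 _].
lra.
Qed.

Lemma P_bounded : exists B, forall m, P m -> forall j, `|m 0 j| <= B.
Proof.
exists (\sum_i \sum_j `|vs i 0 j|) => m [w [w0 [w1 mE]]] j.
rewrite mE summxE; apply: le_trans (ler_norm_sum _ _ _) _; apply: ler_sum => i _.
rewrite !mxE normrM (ger0_norm (w0 i)).
have wi1 : w i <= 1.
  by rewrite -w1 (bigD1 i) //= lerDl sumr_ge0.
apply: le_trans (_ : `|vs i 0 j| <= _); last by rewrite (bigD1 j) //= lerDl sumr_ge0.
rewrite /vs !mxE -[X in _ <= X]mul1r ler_wpM2r //.
Qed.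

Lemma ray_zero p : (forall u, vertex u -> 0 <= dotR u p) -> p = 0.
Proof.
move=> H; have [B HB] := P_bounded.
apply/rowP => j; rewrite mxE; apply/eqP; apply: NNPP => pj; move/negP: pj => pj.
pose t := (`|B| + 1) / `|p 0 j|.
have pj0 : 0 < `|p 0 j| by rewrite normr_gt0.
have Pt : P (t *: p).
  apply: Hrep => // u vu; rewrite dotRZr; apply: le_trans (_ : 0 <= _); first lra.
  by apply: mulr_ge0; [rewrite divr_ge0 // addr_ge0|exact: H].
have := HB _ Pt j; rewrite mxE normrM gtr0_norm ?divr_gt0 ?ltr_pwDr //.
rewrite mulfVK ?gt_eqF //; have := ler_norm B; lra.
Qed.

End Poly7.


Section Lattice.
Variables (R : realType) (n : nat) (V : seq 'rV[int]_n).

Lemma lam_add a b : in_Lambda R V a -> in_Lambda R V b -> in_Lambda R V (a + b).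
Proof.
move=> [k1 [g1 [c1 [H1 E1]]]] [k2 [g2 [c2 [H2 E2]]]].
exists (k1 + k2)%N, (fun i => match split i with inl j => g1 j | inr j => g2 j end),
  (fun i => match split i with inl j => c1 j | inr j => c2 j end); split.
  by move=> i; case: split.
rewrite big_split_ord /= E1 E2; congr (_ + _); apply: eq_bigr => i _.
  by rewrite -[lshift k2 i]/(unsplit (inl i)) unsplitK.
by rewrite -[rshift k1 i]/(unsplit (inr i)) unsplitK.
Qed.

Lemma lam_scale (c : int) a : in_Lambda R V a -> in_Lambda R V (c *: a).
Proof.
move=> [k [g [c1 [H E]]]]; exists k, g, (fun i => c * c1 i); split => //.
by rewrite E scaler_sumr; apply: eq_bigr => i _; rewrite scalerA.
Qed.

Lemma lam_sub a b : in_Lambda R V a -> in_Lambda R V b -> in_Lambda R V (a - b).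
Proof. by move=> La Lb; rewrite -scaleN1r; apply: lam_add La (lam_scale _ Lb). Qed.

Lemma lam_of m : (exists (F : 'rV[R]_n -> Prop) d,
    face (conv V) F /\ affdim F d /\ d.+2 = n /\ F (toR m)) -> in_Lambda R V m.
Proof.
move=> [F [d [f [a [dn Fm]]]]]; exists 1%N, (fun _ => m), (fun _ => 1); split.
  by move=> _; exists F, d.
by rewrite big_ord1 scale1r.
Qed.

Lemma pairZD (e a b : 'rV[int]_n) : pairZ e (a + b) = pairZ e a + pairZ e b.
Proof. by rewrite /pairZ -big_split; apply: eq_bigr => i _; rewrite mxE mulrDr. Qed.

Lemma pairZZ (e : 'rV[int]_n) c a : pairZ e (c *: a) = c * pairZ e a.
Proof. by rewrite /pairZ mulr_sumr; apply: eq_bigr => i _; rewrite mxE mulrCA. Qed.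

Lemma dotZ (e m : 'rV[int]_n) : dotR (toR e) (toR m) = (pairZ e m)%:~R :> R.
Proof. by rewrite -pairR_dot toR_pair. Qed.

Lemma toR0 : toR (0 : 'rV[int]_n) = 0 :> 'rV[R]_n.
Proof. by apply/rowP => i; rewrite !mxE. Qed.

End Lattice.

Lemma intRN1 (R : realType) : ((-1 : int)%:~R : R) = -1.
Proof. by rewrite intrN. Qed.

Lemma intR_eqN1 (R : realType) (a : int) : (a%:~R = -1 :> R) -> a = -1.
Proof. by move=> h; apply/eqP; rewrite -(eqr_int R) h intRN1. Qed.

Lemma intR_geN1 (R : realType) (a : int) : (-1 <= a%:~R :> R) -> (-1 <= a).
Proof. by rewrite -(intRN1 R) ler_int. Qed.

Lemma intR_ge0 (R : realType) (a : int) : (0 <= a%:~R :> R) = (0 <= a).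
Proof. by rewrite -(ler_int R). Qed.


Section Main.
Variables (R : realType) (n : nat) (V : seq 'rV[int]_n.+1).
Local Notation N := n.+1.
Local Notation pt := 'rV[R]_N.
Local Notation lat := 'rV[int]_N.
Local Notation P := (@conv R N V).
Local Notation vs := (@vs R n V).
Local Notation feasible := (@feasible R n V).
Local Notation vertex := (@vertex R n V).
Local Notation G := (@G R n V).
Hypothesis refl : reflexive_polytope R V.

Lemma hP0 : interior P 0. Proof. by case: refl => _ []. Qed.

Lemma vint u : vertex u -> exists e : lat, toR e = u.
Proof.
move=> vu; have [_ [_ hr]] := refl.
have [e ne] := hr _ (facet_vertex vu).
by exists e; exact: normal_vertex vu ne.
Qed.

Lemma feas_normal (F : pt -> Prop) (e : lat) : normal P F e -> feasible (toR e).
Proof. by move=> [h _] i; rewrite -pairR_dot; apply: h; exact: vs_in_P. Qed.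

Lemma pairZ_ge (e m : lat) : feasible (toR e) -> P (toR m) -> -1 <= pairZ e m.
Proof. by move=> fe Pm; apply: (@intR_geN1 R); rewrite -dotZ; exact: feasible_P. Qed.

Lemma lam_ridge (m e1 e2 : lat) : P (toR m) -> feasible (toR e1) -> feasible (toR e2) ->
  e1 != e2 -> pairZ e1 m = -1 -> pairZ e2 m = -1 -> in_Lambda R V m.
Proof.
move=> Pm f1 f2 e12 m1 m2; apply: lam_of.
apply: (ridge hP0 Pm f1 f2).
- by apply: contra e12 => /eqP /toR_inj ->.
- by rewrite dotZ m1 intRN1.
- by rewrite dotZ m2 intRN1.
Qed.

Lemma Hrep_int (m : lat) :
  (forall e : lat, vertex (toR e) -> -1 <= pairZ e m) -> P (toR m).
Proof.
move=> H; apply: (Hrep hP0) => u vu; have [e eE] := vint vu.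
by rewrite -eE dotZ -(intRN1 R) ler_int; apply: H; rewrite eE.
Qed.

End Main.


Lemma main_aux (R : realType) (n : nat) (V : seq 'rV[int]_n.+1)
    (x y : 'rV[int]_n.+1) (Fx : 'rV[R]_n.+1 -> Prop) (etax : 'rV[int]_n.+1) :
  reflexive_polytope R V ->
  facet (conv V) Fx -> relint Fx (toR x) -> normal (conv V) Fx etax ->
  ~ in_Lambda R V x ->
  boundary (conv V) (toR y : 'rV[R]_n.+1) -> in_Lambda R V y -> ~ Fx (toR y) ->
  let p := pairZ etax y *: x + y in
  1 <= pairZ etax y /\
  is_root R V p /\ ~ in_Lambda R V p /\
  pairZ etax p = 0 /\
  (forall (Fp : 'rV[R]_n.+1 -> Prop) (etap : 'rV[int]_n.+1),
      facet (conv V) Fp -> relint Fp (toR p) -> normal (conv V) Fp etap ->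
      pairZ etap x = 0).
Proof.
move=> refl facFx relx normx nLx bnd Ly nFy p.
have P0 := hP0 refl.
have [Fxx _] := relx.
have [PX ex1] := (normx.2 (toR x)).1 Fxx.
have exZ : pairZ etax x = -1 by apply: (@intR_eqN1 R); rewrite -toR_pair.
have fex := feas_normal normx.
have [PY _] := bnd.
set k := pairZ etax y.
have k0 : 0 <= k.
  have := pairZ_ge fex PY; rewrite le_eqVlt => /orP [/eqP e|]; last by rewrite -/k; lia.
  exfalso; apply: nFy; apply/(normx.2 (toR y)); split => //.
  by rewrite toR_pair -e intRN1.
have ax e : @vertex R n V (toR e) -> e != etax -> 0 <= pairZ e x.
  move=> ve en; have := pairZ_ge ve.1 PX; rewrite le_eqVlt => /orP [/eqP e1|]; last lia.
  by exfalso; apply: nLx; apply: (lam_ridge refl PX ve.1 fex en) => //; rewrite -e1.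
have [uy [vuy uyY]] := boundary_facet P0 bnd.
have [ey eyE] := vint refl vuy.
have eyy : pairZ ey y = -1 by apply: (@intR_eqN1 R); rewrite -dotZ eyE.
have lin e : pairZ e p = k * pairZ e x + pairZ e y by rewrite /p pairZD pairZZ.
case: (classic (exists e, @vertex R n V (toR e) /\ pairZ e y = -1 /\ pairZ e x = 0)) => [[eG [vG [Gy Gx]]]|caseB].
-
  have Gn : eG != etax by apply/eqP => E; move: Gy; rewrite E -/k; lia.
  pose z := y + (k + 1) *: x.
  have Pz : conv V (toR z : 'rV[R]_n.+1).
    apply: (Hrep_int refl) => e ve; rewrite /z pairZD pairZZ.
    have [->|en] := eqVneq e etax; first by rewrite exZ -/k; lia.
    have := ax e ve en; have := pairZ_ge ve.1 PY; nia.
  have Lz : in_Lambda R V z.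
    apply: (lam_ridge refl Pz fex vG.1); first by rewrite eq_sym.
      by rewrite /z pairZD pairZZ exZ -/k; lia.
    by rewrite /z pairZD pairZZ Gx Gy; lia.
  have Lkx : in_Lambda R V ((k + 1) *: x).
    have -> : (k + 1) *: x = z - y by rewrite /z [y + _]addrC addrK.
    exact: lam_sub.
  have k1 : 1 <= k.
    case: (ltrP 0 k) => // k00; exfalso; apply: nLx.
    have k00' : k = 0 by lia.
    by move: Lkx; rewrite k00' add0r scale1r.
  have nLp : ~ in_Lambda R V p.
    move=> Lp; apply: nLx.
    have Lk : in_Lambda R V (k *: x).
      have -> : k *: x = p - y by apply/rowP => j; rewrite /p /k !mxE; ring.
      exact: lam_sub.
    have -> : x = (k + 1) *: x - k *: x by apply/rowP => j; rewrite !mxE; ring.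
    exact: lam_sub.
  have pe : pairZ etax p = 0 by rewrite lin exZ; lia.
  have Pp : conv V (toR p : 'rV[R]_n.+1).
    apply: (Hrep_int refl) => e ve; rewrite lin.
    have [->|en] := eqVneq e etax; first by rewrite exZ; lia.
    have := ax e ve en; have := pairZ_ge ve.1 PY; nia.
  have pG : pairZ eG p = -1 by rewrite lin Gx Gy; lia.
  split => //; split; [|split => //; split => //].
    exists (G V (toR eG : 'rV[R]_n.+1)); split; first exact: facet_vertex vG.
    apply: (relint_vertex P0 vG).
      by split => //; rewrite dotZ pG intRN1.
    move=> v vv vn; have [e eE] := vint refl vv; rewrite -eE dotZ.
    rewrite -(intRN1 R) ltr_int; rewrite -eE in vv.
    have h := pairZ_ge vv.1 Pp; rewrite lt_neqAle h andbT.
    apply/eqP => e1; apply: nLp; apply: (lam_ridge refl Pp vv.1 vG.1) => //.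
    by apply: contra vn => /eqP E; rewrite -eE E.
  move=> Fp etap facp relp normp.
  have [Fpp _] := relp; have [_ pp1] := (normp.2 _).1 Fpp.
  have ppZ : pairZ etap p = -1 by apply: (@intR_eqN1 R); rewrite -toR_pair.
  have fep := feas_normal normp.
  have hx := pairZ_ge fep PX; have hy := pairZ_ge fep PY.
  have en : etap != etax by apply/eqP => E; move: ppZ; rewrite E pe.
  move: (ppZ); rewrite lin => ppZ'.
  have le0 : pairZ etap x <= 0 by nia.
  move: hx; rewrite le_eqVlt => /orP [/eqP e1|]; last by lia.
  exfalso; apply: nLx; exact: (lam_ridge refl PX fep fex en).
have caseB' e : @vertex R n V (toR e) -> pairZ e y = -1 -> 1 <= pairZ e x.
  move=> ve ey1; have en : e != etax by apply/eqP => E; move: ey1; rewrite E -/k; lia.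
  have := ax e ve en; have : pairZ e x != 0.
    by apply/eqP => h; apply: caseB; exists e.
  lia.
have [k00|kpos] : k = 0 \/ 1 <= k by lia.
  exfalso.
  pose L := [seq u <- @vlist R n V | dotR u (toR y) == -1].
  have uyL : uy \in L by rewrite mem_filter uyY eqxx /=; apply/vlistP.
  have [b bL bmin] := seq_argmin (fun u => dotR u (toR x)) uyL.
  move: (bL); rewrite mem_filter => /andP [/eqP bY /vlistP vb].
  have [eb ebE] := vint refl vb.
  have ebY : pairZ eb y = -1 by apply: (@intR_eqN1 R); rewrite -dotZ ebE.
  pose tz := pairZ eb x + 1.
  have ebn : eb != etax by apply/eqP => E; move: ebY; rewrite E -/k; lia.
  have vb' : @vertex R n V (toR eb) by rewrite ebE.
  have tz2 : 2 <= tz by have := caseB' eb vb' ebY; rewrite /tz; lia.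
  pose z := x + tz *: y.
  have lz e : pairZ e z = pairZ e x + tz * pairZ e y by rewrite /z pairZD pairZZ.
  have Pz : conv V (toR z : 'rV[R]_n.+1).
    apply: (Hrep_int refl) => e ve; rewrite lz.
    have [->|en] := eqVneq e etax; first by rewrite exZ -/k k00; lia.
    have hy := pairZ_ge ve.1 PY; have hx := ax e ve en.
    move: hy; rewrite le_eqVlt => /orP [/eqP ey1|]; last by nia.
    have eL : toR e \in L.
      by rewrite mem_filter dotZ -ey1 intRN1 eqxx /=; apply/vlistP.
    have := bmin _ eL; rewrite -ebE !dotZ ler_int -ey1 /tz; lia.
  have Lz : in_Lambda R V z.
    apply: (lam_ridge refl Pz fex vb'.1); first by rewrite eq_sym.
      by rewrite lz exZ -/k k00; lia.
    by rewrite lz ebY /tz; lia.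
  apply: nLx; have -> : x = z - tz *: y by apply/rowP => j; rewrite /z !mxE; ring.
  exact: lam_sub Lz (lam_scale _ Ly).
exfalso.
have p0 : toR p = 0 :> 'rV[R]_n.+1.
  apply: (ray_zero P0) => u vu; have [e eE] := vint refl vu.
  rewrite -eE dotZ intR_ge0 lin.
  have [->|en] := eqVneq e etax; first by rewrite exZ; lia.
  rewrite -eE in vu.
  have hx := ax e vu en; have hy := pairZ_ge vu.1 PY.
  move: hy; rewrite le_eqVlt => /orP [/eqP ey1|]; last by nia.
  have := caseB' e vu (esym ey1); rewrite -ey1; nia.
have pz : p = 0 by apply: (@toR_inj R); rewrite p0 toR0.
have vey : @vertex R n V (toR ey) by rewrite eyE.
have k1 : k = 1.
  have := caseB' ey vey eyy; have := lin ey; rewrite pz eyy.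
  rewrite /pairZ big1 => [h1 h2|i _]; last by rewrite mxE mulr0.
  move: h1 h2; set s := \sum_(i < n.+1) _; nia.
apply: nLx.
have -> : x = (1 - k) *: x + p - y by apply/rowP => j; rewrite /p /k !mxE; ring.
rewrite k1 pz subrr scale0r add0r sub0r -scaleN1r.
exact: lam_scale.
Qed.

Theorem mainTheorem2 (R : realType) (n : nat) (V : seq 'rV[int]_n)
    (x y : 'rV[int]_n) (Fx : 'rV[R]_n -> Prop) (etax : 'rV[int]_n) :
  reflexive_polytope R V ->
  (* x in R \ Lambda, with F_x its facet and eta_x the inner normal *)
  facet (conv V) Fx -> relint Fx (toR x) -> normal (conv V) Fx etax ->
  ~ in_Lambda R V x ->
  (* y in boundary(P) \cap Lambda, y not in F_x *)
  boundary (conv V) (toR y : 'rV[R]_n) -> in_Lambda R V y -> ~ Fx (toR y) ->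
  let p := pairZ etax y *: x + y in
  1 <= pairZ etax y /\
  is_root R V p /\ ~ in_Lambda R V p /\
  pairZ etax p = 0 /\
  (forall (Fp : 'rV[R]_n -> Prop) (etap : 'rV[int]_n),
      facet (conv V) Fp -> relint Fp (toR p) -> normal (conv V) Fp etap ->
      pairZ etap x = 0).
Proof.
case: n V x y Fx etax => [|n] V x y Fx etax; last exact: main_aux.
move=> _ _ [Fxx _] [_ nx]; exfalso.
have [_ h] := (nx (toR x)).1 Fxx.
by move: h; rewrite /pairR big_ord0 => /eqP; rewrite eq_sym oppr_eq0 oner_eq0.
Qed.
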